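(* Let $(\mathbb{R}^{2n},\omega)$ be the standard symplectic vector space, $\mathrm{Sp}(n)=\{\psi\in\mathrm{Gl}(2n,\mathbb{R})\mid \omega(\psi v,\psi w)=\omega(v,w)\ \forall v,w\}$, and let $\mathscr{A}(n)=\{S\in\mathrm{Gl}(2n,\mathbb{R})\mid S^2=\mathbb{1},\ \omega(Sv,Sw)=-\omega(v,w)\ \forall v,w\in\mathbb{R}^{2n}\}$ be the space of linear anti-symplectic involutions. Let $R=\begin{pmatrix}\mathbb{1}&0\\0&-\mathbb{1}\end{pmatrix}$ with respect to the splitting $\mathbb{R}^{2n}=\mathbb{R}^n\oplus\mathbb{R}^n$, and let $\mathrm{Sp}^R(n)=\{\psi\in\mathrm{Sp}(n)\mid \psi=R\psi^{-1}R\}$. Identify $\mathrm{Gl}(n,\mathbb{R})$ with the subgroup $\left\{\begin{pmatrix}A&0\\0&(A^T)^{-1}\end{pmatrix}\mid A\in\mathrm{Gl}(n,\mathbb{R})\right\}$ of $\mathrm{Sp}(n)$. Then $\mathrm{Sp}^R(n)$, $\mathscr{A}(n)$, and the homogeneous space (right coset space) $\mathrm{Gl}(n,\mathbb{R})\backslash\mathrm{Sp}(n)$ are pairwise diffeomorphic.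
   Context: $\omega$ is the standard symplectic form on $\mathbb{R}^{2n}=\mathbb{R}^n\oplus\mathbb{R}^n$, for which the two factors $\mathbb{R}^n\oplus 0$ and $0\oplus\mathbb{R}^n$ are Lagrangian (the standard splitting $\mathbb{R}^{2n}\cong T^*\mathbb{R}^n$), so that $R$ is anti-symplectic. *)

(* Defs.v *)
From HB Require Import structures.
From mathcomp Require Import all_boot all_order all_algebra.
From mathcomp Require Import all_classical all_reals all_analysis.
Set Implicit Arguments. Unset Strict Implicit. Unset Printing Implicit Defensive.
Import Order.TTheory GRing.Theory Num.Theory.
Import numFieldNormedType.Exports.
Local Open Scope classical_set_scope.
Local Open Scope ring_scope.

Section Smooth.
Variables (R : realType) (V W : normedModType R).

Fixpoint dirder (f : V -> W) (vs : seq V) : V -> W :=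
  match vs with
  | [::] => f
  | v :: vs' => fun x => 'D_v (dirder f vs') x
  end.

Definition smooth_open (U : set V) (f : V -> W) : Prop :=
  open U /\
  forall (vs : seq V) (x : V), U x ->
    {for x, continuous (dirder f vs)} /\
    (forall v : V, derivable (dirder f vs) x v).

(* smoothness of a map on an arbitrary subset X (Milnor / Guillemin-Pollack):
   locally the restriction of a C^oo map defined on an open set *)
Definition smooth_on (X : set V) (f : V -> W) : Prop :=
  forall x, X x -> exists (U : set V) (F : V -> W),
    U x /\ smooth_open U F /\ (forall y, X y -> U y -> F y = f y).
End Smooth.

Definition diffeomorphic (R : realType) (V W : normedModType R)
  (X : set V) (Y : set W) : Prop :=
  exists (f : V -> W) (g : W -> V),
    (forall x, X x -> Y (f x)) /\ (forall y, Y y -> X (g y)) /\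
    (forall x, X x -> g (f x) = x) /\ (forall y, Y y -> f (g y) = y) /\
    smooth_on X f /\ smooth_on Y g.

Section Symplectic.
Variables (R : realType) (n : nat).

Local Notation M := 'M[R]_(n + n).
Local Notation vec := 'cV[R]_(n + n).

(* standard symplectic matrix w.r.t. R^{2n} = R^n (+) R^n ; both factors
   are Lagrangian *)
Definition Jmx : M := block_mx 0 1%:M (- 1%:M) 0.

Definition omega (v w : vec) : R := (v^T *m Jmx *m w) 0 0.

Definition Rmx : M := block_mx 1%:M 0 0 (- 1%:M).

Definition GL2n : set M := [set A | A \in unitmx].

Definition Sp : set M :=
  [set psi | psi \in unitmx /\
     forall v w : vec, omega (psi *m v) (psi *m w) = omega v w].

Definition antiSp : set M :=
  [set S | S \in unitmx /\ S *m S = 1%:M /\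
     forall v w : vec, omega (S *m v) (S *m w) = - omega v w].

Definition SpR : set M := [set psi | Sp psi /\ psi = Rmx *m invmx psi *m Rmx].

Definition GLemb (A : 'M[R]_n) : M := block_mx A 0 0 (invmx A^T).

Definition GLsub : set M := [set GLemb A | A in [set A | A \in unitmx]].

Definition coset (psi : M) : set M := [set g *m psi | g in GLsub].

Definition cosetSpace : set (set M) := [set coset psi | psi in Sp].

(* the coset space Gl(n)\Sp(n), with its quotient manifold structure, is
   diffeomorphic to the subset Y of a normed space W:  Phi is a bijection
   from the cosets onto Y; Phi \o coset is smooth on Sp(n) (smooth maps out
   of the quotient), and the inverse of Phi locally lifts to smooth maps
   into Sp(n) (smooth maps into the quotient). *)
Definition coset_diffeomorphic (W : normedModType R) (Y : set W) : Prop :=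
  exists Phi : set M -> W,
    (forall C, cosetSpace C -> Y (Phi C)) /\
    (forall C D, cosetSpace C -> cosetSpace D -> Phi C = Phi D -> C = D) /\
    (forall y, Y y -> exists C, cosetSpace C /\ Phi C = y) /\
    smooth_on Sp (fun psi => Phi (coset psi)) /\
    (forall y, Y y -> exists (U : set W) (sigma : W -> M),
        open U /\ U y /\ smooth_on (Y `&` U) sigma /\
        (forall z, Y z -> U z -> Sp (sigma z) /\ Phi (coset (sigma z)) = z)).
End Symplectic.

(* Main.v *)
Require Import Defs.
From HB Require Import structures.
From mathcomp Require Import all_boot all_order all_algebra.
From mathcomp Require Import all_classical all_reals all_analysis.
From mathcomp Require Import fingroup perm.
From mathcomp Require Import zify.
Set Implicit Arguments. Unset Strict Implicit. Unset Printing Implicit Defensive.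
Import Order.TTheory GRing.Theory Num.Theory.
Import numFieldNormedType.Exports.
Local Open Scope classical_set_scope.
Local Open Scope ring_scope.

Section Calc.
Variables (R : realType) (V : normedModType R).

Lemma dirder_rcons (W : normedModType R) (f : V -> W) vs v :
  dirder f (rcons vs v) = dirder (fun x => 'D_v f x) vs.
Proof. by elim: vs => //= a vs ->. Qed.

Lemma open_near (U : set V) x : open U -> U x -> \forall y \near x, U y.
Proof. by move=> oU Ux; apply: open_nbhs_nbhs; split. Qed.

Lemma dirder_loc (W : normedModType R) (U : set V) (f g : V -> W) :
  open U -> (forall x, U x -> f x = g x) ->
  forall vs x, U x -> dirder f vs x = dirder g vs x.
Proof.
move=> oU fg; elim=> [|a vs IH] x Ux /=; first exact: fg.
apply: near_eq_derive; apply: filterS (open_near oU Ux) => y Uy; exact: IH.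
Qed.

Lemma cont_loc (W : normedModType R) (f g : V -> W) x :
  (\forall y \near x, f y = g y) -> {for x, continuous f} -> {for x, continuous g}.
Proof.
move=> fg cf; have e : f x = g x by apply: (nbhs_singleton fg).
move: cf; rewrite /prop_for /continuous_at e => cf.
apply: cvg_trans cf; apply: near_eq_cvg.
by apply: filterS fg => y ->.
Qed.

Definition SmK (U : set V) (W : normedModType R) k (f : V -> W) :=
  forall vs x, (size vs <= k)%N -> U x ->
    {for x, continuous (dirder f vs)} /\ forall v, derivable (dirder f vs) x v.

Definition Sm (U : set V) (W : normedModType R) (f : V -> W) :=
  open U /\ forall k, SmK U k f.

Lemma SmK_le U (W : normedModType R) k l (f : V -> W) :
  (l <= k)%N -> SmK U k f -> SmK U l f.
Proof. by move=> lk H vs x s Ux; apply: H => //; apply: leq_trans lk. Qed.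

Lemma SmK_loc U (W : normedModType R) k (f g : V -> W) : open U ->
  (forall x, U x -> f x = g x) -> SmK U k f -> SmK U k g.
Proof.
move=> oU fg H vs x s Ux; have [c d] := H vs x s Ux.
have nf : \forall y \near x, dirder f vs y = dirder g vs y.
  apply: filterS (open_near oU Ux); move=> y Uy; exact: (dirder_loc oU fg vs Uy).
split; first exact: cont_loc nf c.
by move=> v; apply: near_eq_derivable (d v).
Qed.

Lemma Sm_loc U (W : normedModType R) (f g : V -> W) :
  (forall x, U x -> f x = g x) -> Sm U f -> Sm U g.
Proof. by move=> fg [oU H]; split => // k; apply: SmK_loc (H k). Qed.

Lemma SmK_D U (W : normedModType R) k (f : V -> W) v :
  SmK U k.+1 f -> SmK U k (fun x => 'D_v f x).
Proof.
move=> H vs x s Ux; rewrite -dirder_rcons; apply: H => //.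
by rewrite size_rcons.
Qed.

Lemma Sm_D U (W : normedModType R) (f : V -> W) v :
  Sm U f -> Sm U (fun x => 'D_v f x).
Proof. by move=> [oU H]; split => // k; apply: SmK_D. Qed.

Lemma SmK_ind U (W : normedModType R) k (f : V -> W) :
  (forall x, U x -> {for x, continuous f} /\ forall v, derivable f x v) ->
  (forall v, SmK U k (fun x => 'D_v f x)) -> SmK U k.+1 f.
Proof.
move=> H0 HD vs x; case/lastP: vs => [|vs v] s Ux; first exact: H0.
rewrite dirder_rcons; apply: HD => //; move: s; rewrite size_rcons.
by [].
Qed.

Lemma SmK0 U (W : normedModType R) (f : V -> W) :
  (forall x, U x -> {for x, continuous f} /\ forall v, derivable f x v) ->
  SmK U 0 f.
Proof. by move=> H [|//] x _ Ux; apply: H. Qed.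

Lemma SmK_add U (W : normedModType R) k (f g : V -> W) : open U ->
  SmK U k f -> SmK U k g -> SmK U k (fun x => f x + g x).
Proof.
move=> oU; elim: k f g => [|k IH] f g Hf Hg.
  apply: SmK0 => x Ux; have [cf df] := Hf [::] x isT Ux;
  have [cg dg] := Hg [::] x isT Ux; split; first exact: continuousD.
  by move=> v; apply: derivableD.
apply: SmK_ind.
  move=> x Ux; have [cf df] := Hf [::] x isT Ux;
  have [cg dg] := Hg [::] x isT Ux; split; first exact: continuousD.
  by move=> v; apply: derivableD.
move=> v; apply: (SmK_loc (f := fun x => 'D_v f x + 'D_v g x)) => //.
  move=> x Ux; have [_ df] := Hf [::] x isT Ux; have [_ dg] := Hg [::] x isT Ux.
  by rewrite deriveD.
by apply: IH; apply: SmK_D.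
Qed.

Lemma Sm_add U (W : normedModType R) (f g : V -> W) :
  Sm U f -> Sm U g -> Sm U (fun x => f x + g x).
Proof. by move=> [oU Hf] [_ Hg]; split => // k; apply: SmK_add. Qed.


Lemma SmK_mul U k (f g : V -> R) : open U ->
  SmK U k f -> SmK U k g -> SmK U k (fun x => f x * g x).
Proof.
move=> oU; elim: k f g => [|k IH] f g Hf Hg.
  apply: SmK0 => x Ux; have [cf df] := Hf [::] x isT Ux;
  have [cg dg] := Hg [::] x isT Ux; split; first exact: continuousM.
  by move=> v; apply: derivableM.
apply: SmK_ind.
  move=> x Ux; have [cf df] := Hf [::] x isT Ux;
  have [cg dg] := Hg [::] x isT Ux; split; first exact: continuousM.
  by move=> v; apply: derivableM.
move=> v; apply: (SmK_loc (f := fun x => f x * 'D_v g x + g x * 'D_v f x)) => //.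
  move=> x Ux; have [_ df] := Hf [::] x isT Ux; have [_ dg] := Hg [::] x isT Ux.
  by rewrite deriveM.
apply: SmK_add => //; apply: IH.
- exact: SmK_le Hf.
- exact: SmK_D.
- exact: SmK_le Hg.
- exact: SmK_D.
Qed.

Lemma dirder_cst (W : normedModType R) (c : W) vs :
  dirder (fun _ : V => c) vs = fun _ => if vs is [::] then c else 0.
Proof.
elim: vs => //= a vs ->; apply: funext => x.
case: vs => [|b vs]; exact: derive_cst.
Qed.

Lemma SmK_cst U (W : normedModType R) k (c : W) : SmK U k (fun _ => c).
Proof.
move=> vs x _ _; rewrite dirder_cst; split; first by apply: cst_continuous.
move=> v; exact: derivable_cst.
Qed.

Lemma Sm_cst U (W : normedModType R) (c : W) : open U -> Sm U (fun _ => c).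
Proof. by move=> oU; split => // k; apply: SmK_cst. Qed.

Lemma SmK_inv U k (f : V -> R) : open U -> (forall k, SmK U k f) ->
  (forall x, U x -> f x != 0) -> SmK U k (fun x => (f x)^-1).
Proof.
move=> oU Hf nz; elim: k => [|k IH].
  apply: SmK0 => x Ux; have [cf df] := Hf 0%N [::] x isT Ux; split.
    exact: continuousV (nz x Ux) cf.
  by move=> v; apply: derivableV (nz x Ux) (df v).
apply: SmK_ind.
  move=> x Ux; have [cf df] := Hf 0%N [::] x isT Ux; split.
    exact: continuousV (nz x Ux) cf.
  by move=> v; apply: derivableV (nz x Ux) (df v).
move=> v; apply: (SmK_loc (f := fun x => (-1) * ((f x)^-1 * (f x)^-1) * 'D_v f x)).
- exact: oU.
- move=> x Ux; have [_ df] := Hf 0%N [::] x isT Ux.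
  rewrite deriveV //; last exact: nz.
  by rewrite -exprVn expr2 mulN1r.
- apply: (SmK_mul oU); last by apply: SmK_D.
  apply: (SmK_mul oU); first exact: SmK_cst.
  exact: (SmK_mul oU IH IH).
Qed.

Lemma Sm_mul U (f g : V -> R) : Sm U f -> Sm U g -> Sm U (fun x => f x * g x).
Proof. by move=> [oU Hf] [_ Hg]; split; [exact: oU| move=> k; exact: (SmK_mul oU (Hf k) (Hg k))]. Qed.

Lemma Sm_inv U (f : V -> R) : Sm U f -> (forall x, U x -> f x != 0) ->
  Sm U (fun x => (f x)^-1).
Proof. by move=> [oU Hf] nz; split; [exact: oU| move=> k; exact: (SmK_inv (k:=k) oU Hf nz)]. Qed.

Lemma is_derive_scal_cst (W : normedModType R) (s : V -> R) (a : W) x v :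
  derivable s x v -> is_derive x v (fun y => s y *: a) ('D_v s x *: a).
Proof.
move=> ds.
have L : (fun h => h^-1 *: (((fun y => s y *: a) \o shift x) (h *: v) - s x *: a))
   @ 0^' --> 'D_v s x *: a.
  have -> : (fun h : R => h^-1 *: (((fun y => s y *: a) \o shift x) (h *: v) - s x *: a))
          = (fun h => (h^-1 *: ((s \o shift x) (h *: v) - s x)) *: a).
    by apply: funext => h; rewrite /= -scalerBl scalerA.
  by apply: cvgZr_tmp; exact: ds.
apply: DeriveDef; last exact: cvg_lim L.
by apply/cvg_ex; exists ('D_v s x *: a).
Qed.

Lemma SmK_Dcst U (W : normedModType R) k (f : V -> W) :
  (forall x, {for x, continuous f}) -> (forall x v, derivable f x v) ->
  (forall v, exists c, forall x, 'D_v f x = c) -> SmK U k f.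
Proof.
move=> cf df Dc; case: k => [|k].
  by apply: SmK0 => x _; split.
apply: SmK_ind; first by move=> x _; split.
move=> v; have [c Hc] := Dc v.
have -> : (fun x => 'D_v f x) = (fun _ => c) by apply: funext => x; exact: Hc.
exact: SmK_cst.
Qed.

Lemma SmK_scal U (W : normedModType R) k (s : V -> R) (a : W) : open U ->
  SmK U k s -> SmK U k (fun x => s x *: a).
Proof.
move=> oU; elim: k s => [|k IH] s Hs.
  apply: SmK0 => x Ux; have [cs ds] := Hs [::] x isT Ux; split.
    by apply: continuousZr_tmp.
  by move=> v; have [] := is_derive_scal_cst a (ds v).
apply: SmK_ind.
  move=> x Ux; have [cs ds] := Hs [::] x isT Ux; split.
    by apply: continuousZr_tmp.
  by move=> v; have [] := is_derive_scal_cst a (ds v).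
move=> v; apply: (SmK_loc (f := fun x => 'D_v s x *: a)) => //.
  move=> x Ux; have [_ ds] := Hs [::] x isT Ux.
  by have [_ ->] := is_derive_scal_cst a (ds v).
by apply: IH; apply: SmK_D.
Qed.

Lemma Sm_scal U (W : normedModType R) (s : V -> R) (a : W) :
  Sm U s -> Sm U (fun x => s x *: a).
Proof. by move=> [oU Hs]; split; [exact: oU| move=> k; exact: (SmK_scal a oU (Hs k))]. Qed.

Lemma Sm_sum U (W : normedModType R) (I : Type) (r : seq I) (F : I -> V -> W) :
  open U -> (forall i, Sm U (F i)) -> Sm U (fun x => \sum_(i <- r) F i x).
Proof.
move=> oU HF; elim: r => [|i r IH].
  by apply: (Sm_loc (f := fun _ => 0)); [move=> x _; rewrite big_nil|exact: Sm_cst].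
apply: (Sm_loc (f := fun x => F i x + \sum_(j <- r) F j x)).
  by move=> x _; rewrite big_cons.
exact: (Sm_add (HF i) IH).
Qed.

Lemma Sm_prod U (I : Type) (r : seq I) (F : I -> V -> R) :
  open U -> (forall i, Sm U (F i)) -> Sm U (fun x => \prod_(i <- r) F i x).
Proof.
move=> oU HF; elim: r => [|i r IH].
  by apply: (Sm_loc (f := fun _ => (1 : R))); [move=> x _; rewrite big_nil|exact: Sm_cst].
apply: (Sm_loc (f := fun x => F i x * \prod_(j <- r) F j x)).
  by move=> x _; rewrite big_cons.
exact: (Sm_mul (HF i) IH).
Qed.

End Calc.

Section CalcM.
Variables (R : realType) (V : normedModType R) (U : set V).

Definition SmM p q (F : V -> 'M[R]_(p, q)) := forall i j, Sm U (fun z => F z i j).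

Lemma SmM_Sm p q (F : V -> 'M[R]_(p, q)) : open U -> SmM F -> Sm U F.
Proof.
move=> oU HF.
apply: (Sm_loc (f := fun z => \sum_(i < p) \sum_(j < q) F z i j *: delta_mx i j)).
  by move=> z _; rewrite -matrix_sum_delta.
apply: Sm_sum => // i; apply: Sm_sum => // j; exact: Sm_scal.
Qed.

Lemma Sm_opp (f : V -> R) : Sm U f -> Sm U (fun z => - f z).
Proof.
move=> Hf; have [oU _] := Hf.
apply: (Sm_loc (f := fun z => (-1) * f z)); first by move=> z _; rewrite mulN1r.
exact: (Sm_mul (Sm_cst (-1 : R) oU) Hf).
Qed.

Lemma SmM_cst p q (A : 'M[R]_(p, q)) : open U -> SmM (fun _ => A).
Proof. by move=> oU i j; apply: Sm_cst. Qed.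

Lemma SmM_add p q (F G : V -> 'M[R]_(p, q)) : SmM F -> SmM G -> SmM (fun z => F z + G z).
Proof.
move=> HF HG i j; apply: (Sm_loc (f := fun z => F z i j + G z i j)).
  by move=> z _; rewrite mxE.
exact: (Sm_add (HF i j) (HG i j)).
Qed.

Lemma SmM_opp p q (F : V -> 'M[R]_(p, q)) : SmM F -> SmM (fun z => - F z).
Proof.
move=> HF i j; apply: (Sm_loc (f := fun z => - F z i j)); first by move=> z _; rewrite mxE.
exact: (Sm_opp (HF i j)).
Qed.

Lemma SmM_scale p q (c : V -> R) (F : V -> 'M[R]_(p, q)) : Sm U c -> SmM F ->
  SmM (fun z => c z *: F z).
Proof.
move=> Hc HF i j; apply: (Sm_loc (f := fun z => c z * F z i j)); first by move=> z _; rewrite mxE.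
exact: (Sm_mul Hc (HF i j)).
Qed.

Lemma SmM_mul p q r (F : V -> 'M[R]_(p, q)) (G : V -> 'M[R]_(q, r)) : open U ->
  SmM F -> SmM G -> SmM (fun z => F z *m G z).
Proof.
move=> oU HF HG i j.
apply: (Sm_loc (f := fun z => \sum_(k < q) F z i k * G z k j)).
  by move=> z _; rewrite mxE.
apply: Sm_sum => // k; exact: (Sm_mul (HF i k) (HG k j)).
Qed.

Lemma SmM_tr p q (F : V -> 'M[R]_(p, q)) : SmM F -> SmM (fun z => (F z)^T).
Proof.
move=> HF i j; apply: (Sm_loc (f := fun z => F z j i)); first by move=> z _; rewrite mxE.
exact: HF.
Qed.

Lemma SmM_block p1 p2 q1 q2 (A : V -> 'M[R]_(p1, q1)) (B : V -> 'M[R]_(p1, q2))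
  (C : V -> 'M[R]_(p2, q1)) (D : V -> 'M[R]_(p2, q2)) :
  SmM A -> SmM B -> SmM C -> SmM D -> SmM (fun z => block_mx (A z) (B z) (C z) (D z)).
Proof.
move=> HA HB HC HD i j.
rewrite -(splitK i) -(splitK j); case: (fintype.split i) => i'; case: (fintype.split j) => j' /=.
- by apply: (Sm_loc (f := fun z => A z i' j')); [move=> z _; rewrite block_mxEul|exact: HA].
- by apply: (Sm_loc (f := fun z => B z i' j')); [move=> z _; rewrite block_mxEur|exact: HB].
- by apply: (Sm_loc (f := fun z => C z i' j')); [move=> z _; rewrite block_mxEdl|exact: HC].
- by apply: (Sm_loc (f := fun z => D z i' j')); [move=> z _; rewrite block_mxEdr|exact: HD].
Qed.

Lemma SmM_ursub p1 p2 q1 q2 (F : V -> 'M[R]_(p1 + p2, q1 + q2)) : SmM F ->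
  SmM (fun z => ursubmx (F z)).
Proof.
move=> HF i j; apply: (Sm_loc (f := fun z => F z (lshift p2 i) (rshift q1 j))).
  by move=> z _; rewrite /ursubmx /rsubmx /usubmx !mxE.
exact: HF.
Qed.

Lemma Sm_det m (F : V -> 'M[R]_m) : open U -> SmM F -> Sm U (fun z => \det (F z)).
Proof.
move=> oU HF.
apply: (Sm_loc (f := fun z => \sum_(s : 'S_m) (-1) ^+ s * \prod_i F z i (s i))).
  by move=> z _.
apply: Sm_sum => // s; apply: (Sm_mul (Sm_cst _ oU)).
apply: Sm_prod => // i; exact: HF.
Qed.

Lemma SmM_adj m (F : V -> 'M[R]_m) : open U -> SmM F -> SmM (fun z => \adj (F z)).
Proof.
move=> oU HF i j.
apply: (Sm_loc (f := fun z => (-1) ^+ (j + i) * \det (row' j (col' i (F z))))).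
  by move=> z _; rewrite mxE.
apply: (Sm_mul (Sm_cst _ oU)); apply: Sm_det => // k l.
apply: (Sm_loc (f := fun z => F z (lift j k) (lift i l))); first by move=> z _; rewrite !mxE.
exact: HF.
Qed.

Lemma SmM_inv m (F : V -> 'M[R]_m) : open U -> SmM F ->
  (forall z, U z -> F z \in unitmx) -> SmM (fun z => invmx (F z)).
Proof.
move=> oU HF Hu i j.
apply: (Sm_loc (f := fun z => (\det (F z))^-1 * \adj (F z) i j)).
  by move=> z Uz; rewrite /invmx (Hu z Uz) [in RHS]mxE.
apply: Sm_mul; last exact: SmM_adj.
apply: Sm_inv; first exact: Sm_det.
by move=> z Uz; have := Hu z Uz; rewrite unitmxE unitfE.
Qed.

End CalcM.

Section Sym.
Variables (R : realType) (n : nat).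
Local Notation M := 'M[R]_(n + n).
Local Notation vec := 'cV[R]_(n + n).
Local Notation J := (Jmx R n).
Local Notation Rm := (Rmx R n).

Definition symp (A : M) := A^T *m J *m A = J.
Definition asymp (A : M) := A^T *m J *m A = - J.

Lemma JT : J^T = - J.
Proof.
by rewrite /Jmx tr_block_mx !trmx0 trmx1 linearN /= trmx1 opp_block_mx !oppr0 opprK.
Qed.

Lemma JJ : J *m J = - 1%:M.
Proof.
rewrite /Jmx mulmx_block !mulmx0 !mul0mx !mulmx1 !mul1mx !add0r !addr0.
by rewrite [in RHS](scalar_mx_block n n) opp_block_mx !oppr0.
Qed.

Lemma oppE p q (X : 'M[R]_(p,q)) i j : (- X) i j = - X i j.
Proof. by rewrite mxE. Qed.

Ltac bsimp := rewrite ?(mulmx0, mul0mx, mulmx1, mul1mx, add0r, addr0, mulNmx, mulmxN, opprK, oppr0).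

Lemma RR : Rm *m Rm = 1%:M.
Proof.
rewrite /Rmx mulmx_block; bsimp.
by rewrite [in RHS](scalar_mx_block n n).
Qed.

Lemma RT : Rm^T = Rm.
Proof. by rewrite /Rmx tr_block_mx !trmx0 trmx1 linearN /= trmx1. Qed.

Lemma RJ : Rm *m J = - (J *m Rm).
Proof.
rewrite /Rmx /Jmx !mulmx_block; bsimp.
by rewrite opp_block_mx; bsimp.
Qed.

Lemma asymR : Rm^T *m J *m Rm = - J.
Proof. by rewrite RT RJ mulNmx -mulmxA RR mulmx1. Qed.

Lemma inv_uniq m (A B : 'M[R]_m) : B *m A = 1%:M -> invmx A = B.
Proof.
move=> h; have [_ uA] := mulmx1_unit h.
by rewrite -[invmx A]mul1mx -h -mulmxA mulmxV // mulmx1.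
Qed.

Lemma form_eq (X Y : M) :
  (forall v w : vec, (v^T *m X *m w) 0 0 = (v^T *m Y *m w) 0 0) -> X = Y.
Proof.
move=> H; apply/matrixP => i j; have := H (delta_mx i 0) (delta_mx j 0).
by rewrite !trmx_delta -!rowE -!colE !mxE.
Qed.

Lemma omega_mul (A : M) (v w : vec) :
  omega (A *m v) (A *m w) = (v^T *m (A^T *m J *m A) *m w) 0 0.
Proof. by rewrite /omega trmx_mul !mulmxA. Qed.

Lemma symp_inv (A : M) : symp A -> invmx A = - (J *m A^T *m J).
Proof.
move=> h; apply: inv_uniq.
by rewrite mulNmx -!mulmxA [A^T *m _]mulmxA h JJ opprK.
Qed.

Lemma symp_unit (A : M) : symp A -> A \in unitmx.
Proof.
move=> h; have := symp_inv h => e.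
have h1 : (- (J *m A^T *m J)) *m A = 1%:M.
  by rewrite mulNmx -!mulmxA [A^T *m _]mulmxA h JJ opprK.
by have [] := mulmx1_unit h1.
Qed.

Lemma Sp_symp (A : M) : Sp A <-> symp A.
Proof.
split.
  move=> [_ H]; apply: form_eq => v w; have := H v w.
  by rewrite omega_mul /omega.
move=> h; split; first exact: symp_unit.
by move=> v w; rewrite omega_mul h.
Qed.

Lemma antiSp_E (S : M) : antiSp S <-> S *m S = 1%:M /\ asymp S.
Proof.
split.
  move=> [_ [SS H]]; split => //; apply: form_eq => v w; have := H v w.
  by rewrite omega_mul /omega mulmxN mulNmx oppE.
move=> [SS h]; split; first by have [] := mulmx1_unit SS.
split => // v w; rewrite omega_mul h /omega mulmxN mulNmx oppE //.
Qed.

Lemma SpR_E (A : M) : SpR A <-> symp A /\ A = Rm *m invmx A *m Rm.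
Proof.
split; first by move=> [/Sp_symp h e].
by move=> [h e]; split => //; apply/Sp_symp.
Qed.

Lemma RRK (A : M) : Rm *m (Rm *m A) = A.
Proof. by rewrite mulmxA RR mul1mx. Qed.

Lemma SpR_anti (A : M) : SpR A -> antiSp (Rm *m A).
Proof.
move=> /SpR_E [h e]; have uA := symp_unit h.
have e2 : Rm *m A *m Rm = invmx A.
  by rewrite {1}e !mulmxA RR mul1mx -mulmxA RR mulmx1.
apply/antiSp_E; split.
  by rewrite mulmxA e2 mulVmx.
rewrite /asymp trmx_mul -!mulmxA [Rm^T *m _]mulmxA [Rm^T *m J *m _]mulmxA asymR.
by rewrite mulNmx mulmxN mulmxA h.
Qed.

Lemma anti_SpR (S : M) : antiSp S -> SpR (Rm *m S).
Proof.
move=> /antiSp_E [SS h]; apply/SpR_E; split.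
  rewrite /symp trmx_mul -!mulmxA [Rm^T *m _]mulmxA [Rm^T *m J *m _]mulmxA asymR.
  by rewrite mulNmx mulmxN mulmxA h opprK.
have -> : invmx (Rm *m S) = S *m Rm.
  by apply: inv_uniq; rewrite -mulmxA [Rm *m _]mulmxA RR mul1mx.
by rewrite !mulmxA -[_ *m Rm *m Rm]mulmxA RR mulmx1.
Qed.


Lemma half_eq0 p q (x : 'M[R]_(p, q)) : - x = x -> x = 0.
Proof.
move=> h; have h2 : x + x = 0 by rewrite -{1}h addNr.
by rewrite -[x]scale1r (splitr 1) scalerDl -scalerDr h2 scaler0.
Qed.

Lemma GLemb_R (A : 'M[R]_n) : GLemb A *m Rm = Rm *m GLemb A.
Proof. by rewrite /GLemb /Rmx !mulmx_block; bsimp. Qed.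

Lemma GLemb_mul (A B : 'M[R]_n) : A \in unitmx -> B \in unitmx ->
  GLemb A *m GLemb B = GLemb (A *m B).
Proof.
move=> uA uB; rewrite /GLemb mulmx_block; bsimp; congr block_mx.
rewrite trmx_mul; symmetry; apply: inv_uniq.
rewrite -mulmxA [invmx B^T *m _]mulmxA mulVmx ?unitmx_tr // mul1mx mulVmx //.
by rewrite unitmx_tr.
Qed.

Lemma GLemb1 : GLemb (1%:M : 'M[R]_n) = 1%:M.
Proof. by rewrite /GLemb trmx1 invmx1 -scalar_mx_block. Qed.

Lemma GLemb_unit (A : 'M[R]_n) : A \in unitmx -> GLemb A \in unitmx.
Proof.
move=> uA; have h : GLemb A *m GLemb (invmx A) = 1%:M.
  by rewrite GLemb_mul ?unitmx_inv // mulmxV // GLemb1.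
by have [] := mulmx1_unit h.
Qed.

Definition Q (A : M) : M := invmx A *m Rm *m A.

Lemma invM (A B : M) : A \in unitmx -> B \in unitmx -> invmx (A *m B) = invmx B *m invmx A.
Proof.
move=> uA uB; apply: inv_uniq.
by rewrite -mulmxA [invmx A *m _]mulmxA mulVmx // mul1mx mulVmx.
Qed.

Lemma Q_GL (A : 'M[R]_n) (P : M) : A \in unitmx -> P \in unitmx ->
  Q (GLemb A *m P) = Q P.
Proof.
move=> uA uP; rewrite /Q invM ?GLemb_unit //.
rewrite -!mulmxA; congr (_ *m _); rewrite !mulmxA; congr (_ *m _).
by rewrite -mulmxA -GLemb_R mulmxA mulVmx ?GLemb_unit // mul1mx.
Qed.

Lemma coset_GL (A : 'M[R]_n) (P : M) : A \in unitmx ->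
  coset (GLemb A *m P) = coset P.
Proof.
move=> uA; apply/seteqP; split => _ [g [B uB <-] <-].
  exists (GLemb (B *m A)); first by exists (B *m A) => //=; rewrite unitmx_mul uB uA.
  by rewrite mulmxA GLemb_mul.
exists (GLemb (B *m invmx A)).
  by exists (B *m invmx A) => //=; rewrite unitmx_mul uB unitmx_inv uA.
by rewrite mulmxA GLemb_mul ?unitmx_inv ?unitmx_mul ?unitmx_inv ?uB // mulmxKV.
Qed.

Definition Phi (C : set M) : M := Q (xget 0 C).

Lemma Phi_coset (P : M) : P \in unitmx -> Phi (coset P) = Q P.
Proof.
move=> uP; rewrite /Phi.
have : coset P (xget 0 (coset P)).
  apply: xgetPex; exists P; exists 1%:M; first by exists 1%:M; [exact: unitmx1 | exact: GLemb1].
  by rewrite mul1mx.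
by move=> [_ [A uA <-] <-]; rewrite Q_GL.
Qed.

Lemma symp_mul (A B : M) : symp A -> symp B -> symp (A *m B).
Proof.
move=> hA hB; rewrite /symp trmx_mul -!mulmxA [A^T *m _]mulmxA [A^T *m _ *m _]mulmxA hA.
by rewrite mulmxA hB.
Qed.

Lemma symp_invmx (A : M) : symp A -> symp (invmx A).
Proof.
move=> h; have uA := symp_unit h.
have := congr1 (fun X => (invmx A)^T *m X *m invmx A) h.
rewrite /= !mulmxA -trmx_mul mulmxV // trmx1 mul1mx -mulmxA mulmxV // mulmx1.
by move=> e; rewrite /symp [in RHS]e.
Qed.

Lemma commR (g : M) : g *m Rm = Rm *m g -> g = block_mx (ulsubmx g) 0 0 (drsubmx g).
Proof.
rewrite -{1 2}[g]submxK /Rmx !mulmx_block; bsimp.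
move/eq_block_mx => [_ hb hc _].
have hb0 : ursubmx g = 0 by apply: half_eq0; first [exact: hb | exact: esym hb].
have hc0 : dlsubmx g = 0 by apply: half_eq0; first [exact: hc | exact: esym hc].
by rewrite -{1}[g]submxK hb0 hc0.
Qed.


Lemma symp_diag (a d : 'M[R]_n) : symp (block_mx a 0 0 d) -> a^T *m d = 1%:M.
Proof.
rewrite /symp /Jmx tr_block_mx !trmx0 !mulmx_block; bsimp.
by move/eq_block_mx => [_ h _ _].
Qed.

Lemma diag_GL (a d : 'M[R]_n) : a^T *m d = 1%:M -> a \in unitmx /\ d = invmx a^T.
Proof.
move=> h; have [ua _] := mulmx1_unit h; split; first by rewrite -unitmx_tr.
by rewrite -[d]mul1mx -(mulVmx ua) -mulmxA h mulmx1.
Qed.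

Lemma Q_inj (P1 P2 : M) : symp P1 -> symp P2 -> Q P1 = Q P2 -> coset P1 = coset P2.
Proof.
move=> h1 h2 e; have u1 := symp_unit h1; have u2 := symp_unit h2.
set g := P2 *m invmx P1.
have gR : g *m Rm = Rm *m g.
  have := congr1 (fun X => P2 *m X *m invmx P1) e; rewrite /Q /= !mulmxA.
  rewrite mulmxK // mulmxV // mul1mx => hh; by rewrite /g hh ?mulmxA.
have sg : symp g by apply: symp_mul => //; apply: symp_invmx.
have eg := commR gR.
rewrite eg in sg; have /diag_GL [ua hd] := symp_diag sg.
have eP2 : P2 = GLemb (ulsubmx g) *m P1.
  by rewrite /GLemb -hd -eg /g mulmxKV.
by rewrite eP2 coset_GL.
Qed.


Lemma G_shape (G : M) : Rm *m G *m Rm = - G -> G^T = - G ->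
  G = block_mx 0 (ursubmx G) (- (ursubmx G)^T) 0.
Proof.
move=> h1 h2; rewrite -[G]submxK in h1 h2 *.
move: h1 h2; rewrite /Rmx !mulmx_block tr_block_mx !opp_block_mx; bsimp.
move=> /eq_block_mx [ha _ _ hd] /eq_block_mx [_ _ hc _].
rewrite block_mxKur.
have -> : ulsubmx G = 0 by apply: half_eq0; first [exact: ha | exact: esym ha].
have -> : drsubmx G = 0 by apply: half_eq0; first [exact: hd | exact: esym hd].
by rewrite hc opprK.
Qed.

Definition Kb (N : M) : 'M[R]_n := ursubmx (N^T *m J *m N).
Definition Dm (N : M) : M := block_mx 1%:M 0 0 (Kb N).
Definition sec (N : M) : M := Dm N *m invmx N.

Lemma DJD (K : 'M[R]_n) :
  (block_mx 1%:M 0 0 K)^T *m J *m block_mx 1%:M 0 0 K = block_mx 0 K (- K^T) 0.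
Proof. by rewrite tr_block_mx !trmx0 trmx1 /Jmx !mulmx_block; bsimp. Qed.

Lemma sec_symp (S N : M) : asymp S -> S *m N = N *m Rm -> N \in unitmx ->
  symp (sec N).
Proof.
move=> aS hSN uN.
set G := N^T *m J *m N.
have h1 : Rm *m G *m Rm = - G.
  have -> : Rm *m G *m Rm = (N *m Rm)^T *m J *m (N *m Rm).
    by rewrite /G trmx_mul RT !mulmxA.
  have e : N^T *m S^T *m J *m S *m N = N^T *m (S^T *m J *m S) *m N by rewrite !mulmxA.
  by rewrite -hSN trmx_mul !mulmxA e aS mulmxN mulNmx.
have h2 : G^T = - G.
  by rewrite /G !trmx_mul trmxK JT mulNmx mulmxN !mulmxA.
have e1 : (Dm N)^T *m J *m Dm N = G by rewrite /Dm DJD /Kb -/G -G_shape.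
rewrite /symp /sec trmx_mul.
have -> : (invmx N)^T *m (Dm N)^T *m J *m (Dm N *m invmx N)
   = (invmx N)^T *m ((Dm N)^T *m J *m Dm N) *m invmx N by rewrite !mulmxA.
rewrite e1 /G !mulmxA -trmx_mul mulmxV // trmx1 mul1mx -mulmxA mulmxV // mulmx1.
by [].
Qed.

Lemma sec_Q (S N : M) : S *m N = N *m Rm -> N \in unitmx -> symp (sec N) ->
  Q (sec N) = S.
Proof.
move=> hSN uN hs.
have hD : Rm *m Dm N = Dm N *m Rm by rewrite /Dm /Rmx !mulmx_block; bsimp.
have hN : Rm *m invmx N = invmx N *m S.
  have := congr1 (fun X => invmx N *m X *m invmx N) hSN.
  by rewrite /= !mulmxA mulmxK // mulVmx // mul1mx => ->.
have hR : Rm *m sec N = sec N *m S by rewrite /sec mulmxA hD -mulmxA hN mulmxA.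
by rewrite /Q -mulmxA hR mulmxA mulVmx ?symp_unit // mul1mx.
Qed.

End Sym.

Section Inter.
Variables (R : realType) (n : nat).
Local Notation M := 'M[R]_(n + n).
Local Notation J := (Jmx R n).
Local Notation Rm := (Rmx R n).

Lemma rank_lunit m (A : 'M[R]_m) p (X : 'M[R]_(m, p)) : A \in unitmx ->
  \rank (A *m X) = \rank X.
Proof.
move=> uA; rewrite -mxrank_tr trmx_mul mxrankMfree ?mxrank_tr //.
by rewrite row_free_unit unitmx_tr.
Qed.

Lemma intertw (S : M) : S *m S = 1%:M -> asymp S ->
  exists N : M, N \in unitmx /\ S *m N = N *m Rm.
Proof.
move=> SS aS.
set T := S^T.
have TT : T *m T = 1%:M by rewrite /T -trmx_mul SS trmx1.
set Pp := T + 1%:M; set Pm := T - 1%:M.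
have hPp : Pp *m T = Pp by rewrite /Pp mulmxDl TT mul1mx addrC.
have hPm : Pm *m T = - Pm by rewrite /Pm mulmxBl TT mul1mx opprB.
have hPP : Pp *m Pm = 0.
  by rewrite /Pp /Pm mulmxBr mulmxDl TT mul1mx mulmx1 [1%:M + T]addrC subrr.
have uJ : J \in unitmx.
  have h : J *m (- J) = 1%:M by rewrite mulmxN JJ opprK.
  by have [] := mulmx1_unit h.
have SJ : S^T *m J = - (J *m S).
  have := congr1 (fun X => X *m S) aS.
  by rewrite /= -mulmxA SS mulmx1 mulNmx.
have PpJ : Pp *m J = J *m (1%:M - S).
  by rewrite /Pp mulmxDl /T SJ mul1mx mulmxBr mulmx1 addrC.
have r1 : \rank Pp = \rank Pm.
  rewrite -(mxrankMfree _ (_ : row_free J)); last by rewrite row_free_unit.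
  rewrite PpJ rank_lunit // -mxrank_tr linearB /= trmx1 -/T.
  have -> : 1%:M - T = - Pm by rewrite /Pm opprB.
  by rewrite eqmx_opp.
have r2 : (\rank Pp + \rank Pm <= n + n)%N.
  have : (Pp <= kermx Pm)%MS by apply/sub_kermxP.
  move/mxrankS; rewrite mxrank_ker => h.
  have := rank_leq_col Pm; lia.
have r3 : (n + n <= \rank Pp + \rank Pm)%N.
  have e1 : 1%:M = 2^-1 *: (Pp - Pm) :> M.
    have -> : Pp - Pm = 1%:M + 1%:M by rewrite /Pp /Pm opprB addrC addrA subrK.
    rewrite -mulr2n -scalerMnr scalerMnl -mulr_natr mulVf ?scale1r //.
  have s1 : (1%:M <= Pp + Pm)%MS.
    rewrite e1; apply: scalemx_sub; apply: addmx_sub_adds; first exact: submx_refl.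
    by rewrite eqmx_opp submx_refl.
  have := mxrankS s1; rewrite mxrank1 => h.
  apply: leq_trans h _; exact: (mxrank_adds_leqif Pp Pm).1.
have rn : \rank Pp = n by lia.
have rm : \rank Pm = n by lia.
pose Up : 'M[R]_(n, n + n) := castmx (rn, erefl (n + n)) (row_base Pp).
pose Dn : 'M[R]_(n, n + n) := castmx (rm, erefl (n + n)) (row_base Pm).
have eU : (Up :=: Pp)%MS := eqmx_trans (eqmx_cast _ _) (eq_row_base Pp).
have eD : (Dn :=: Pm)%MS := eqmx_trans (eqmx_cast _ _) (eq_row_base Pm).
have hU : Up *m T = Up.
  have : (Up <= Pp)%MS by rewrite eU submx_refl.
  by case/submxP => D eD'; rewrite eD' -mulmxA hPp.
have hD : Dn *m T = - Dn.
  have : (Dn <= Pm)%MS by rewrite eD submx_refl.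
  by case/submxP => D eD'; rewrite eD' -mulmxA hPm mulmxN.
pose Mt : M := col_mx Up Dn.
have uMt : Mt \in unitmx.
  rewrite -row_full_unit -sub1mx /Mt -addsmxE (adds_eqmx eU eD).
  have e1 : 1%:M = 2^-1 *: (Pp - Pm) :> M.
    have -> : Pp - Pm = 1%:M + 1%:M by rewrite /Pp /Pm opprB addrC addrA subrK.
    rewrite -mulr2n -scalerMnr scalerMnl -mulr_natr mulVf ?scale1r //.
  rewrite e1; apply: scalemx_sub; apply: addmx_sub_adds; first exact: submx_refl.
  by rewrite eqmx_opp submx_refl.
have hMt : Mt *m T = Rm *m Mt.
  by rewrite /Mt mul_col_mx hU hD /Rmx mul_block_col !mul1mx !mul0mx !addr0 !add0r mulNmx mul1mx.
exists Mt^T; split; first by rewrite unitmx_tr.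
have := congr1 trmx hMt; rewrite !trmx_mul /T trmxK RT => ->.
by [].
Qed.

End Inter.

Section Main.
Variables (R : realType) (n : nat).
Local Notation M := 'M[R]_(n + n).
Local Notation J := (Jmx R n).
Local Notation Rm := (Rmx R n).

Lemma Sm_coord p q (U : set 'M[R]_(p, q)) i j : open U -> Sm U (fun z : 'M[R]_(p, q) => z i j).
Proof.
move=> oU; split => // k; apply: SmK_Dcst.
- move=> x; exact: coord_continuous.
- move=> x v; have /derivable_mxP h := @derivable_id _ _ x v; exact: h i j.
- move=> v; exists (v i j) => x.
  have := derive_mx (@derivable_id _ _ x v); rewrite derive_id => /(congr1 (fun A : 'M[R]_(p, q) => A i j)).
  by rewrite mxE => ->.
Qed.

Lemma SmM_id p q (U : set 'M[R]_(p, q)) : open U -> SmM U (fun z : 'M[R]_(p, q) => z).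
Proof. by move=> oU i j; apply: Sm_coord. Qed.

Lemma Sm_smooth (V W : normedModType R) (U : set V) (f : V -> W) : Sm U f -> smooth_open U f.
Proof. by move=> [oU H]; split => // vs x Ux; exact: (H (size vs) vs x (leqnn _) Ux). Qed.

Lemma SmM_smooth_on (X U : set M) p q (F : M -> 'M[R]_(p, q)) :
  open U -> SmM U F -> X `<=` U -> smooth_on X F.
Proof.
move=> oU HF XU x Xx; exists U, F; split; first exact: XU.
by split => //; apply: Sm_smooth; apply: SmM_Sm.
Qed.

Lemma Sm_subset (V W : normedModType R) (U : set V) (f : V -> W) :
  open U -> Sm setT f -> Sm U f.
Proof. by move=> oU [_ H]; split => // k vs x s Ux; apply: H. Qed.

Lemma SmM_subset (U : set M) p q (F : M -> 'M[R]_(p, q)) :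
  open U -> SmM setT F -> SmM U F.
Proof. by move=> oU HF i j; apply: Sm_subset. Qed.

Lemma Sm_cont (V W : normedModType R) (U : set V) (f : V -> W) x :
  Sm U f -> U x -> {for x, continuous f}.
Proof. by move=> [_ H] Ux; have [c _] := H 0%N [::] x isT Ux. Qed.

Lemma SmM_lin (A : M) : SmM setT (fun z : M => A *m z).
Proof. apply: SmM_mul; [exact: openT | exact: (SmM_cst _ openT) | exact: (SmM_id openT)]. Qed.


Lemma Q_anti (P : M) : symp P -> antiSp (Q P).
Proof.
move=> h; have uP := symp_unit h; apply/antiSp_E; split.
  by rewrite /Q !mulmxA mulmxK // -[invmx P *m Rm *m Rm]mulmxA RR mulmx1 mulVmx.
rewrite /asymp /Q !trmx_mul.
have -> : P^T *m (Rm^T *m (invmx P)^T) *m J *m (invmx P *m Rm *m P)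
   = P^T *m (Rm^T *m ((invmx P)^T *m J *m invmx P) *m Rm) *m P by rewrite !mulmxA.
by rewrite (symp_invmx h) asymR mulmxN mulNmx h.
Qed.

Lemma part1 : diffeomorphic (@SpR R n) (@antiSp R n).
Proof.
exists (fun X : M => Rm *m X), (fun X : M => Rm *m X).
split; first exact: SpR_anti.
split; first exact: anti_SpR.
split; first by move=> x _; rewrite RRK.
split; first by move=> y _; rewrite RRK.
by split; apply: (SmM_smooth_on (U := setT)) => //; [exact: openT | exact: SmM_lin|exact: openT|exact: SmM_lin].
Qed.

Definition Nf (N0 : M) (z : M) : M := N0 + z *m N0 *m Rm.




Lemma SmM_smooth_on' (X U : set M) p q (F f : M -> 'M[R]_(p, q)) :
  open U -> SmM U F -> X `<=` U -> (forall x, X x -> F x = f x) -> smooth_on X f.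
Proof.
move=> oU HF XU e x Xx; exists U, F; split; first exact: XU.
split; first by apply: Sm_smooth; apply: SmM_Sm.
by move=> z Xz _; exact: e.
Qed.

Lemma two_unit (N0 : M) : N0 \in unitmx -> N0 + N0 \in unitmx.
Proof.
move=> u; have h : (N0 + N0) *m (2^-1 *: invmx N0) = 1%:M.
  rewrite -scalemxAr mulmxDl mulmxV //.
  by rewrite -mulr2n -scalerMnr scalerMnl -mulr_natr mulVf ?scale1r.
by have [] := mulmx1_unit h.
Qed.

Lemma local_sec (Phi0 : M -> M) (y : M) :
  SmM setT Phi0 -> antiSp (Phi0 y) ->
  exists (U : set M) (sg : M -> M), open U /\ U y /\ SmM U sg /\
   forall z, U z -> antiSp (Phi0 z) -> symp (sg z) /\ Q (sg z) = Phi0 z.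
Proof.
move=> HP /antiSp_E [SS aS].
have [N0 [uN0 hN0]] := intertw SS aS.
pose F := fun z => Nf N0 (Phi0 z).
have HF : SmM setT F.
  apply: SmM_add; first exact: (SmM_cst _ openT).
  apply: SmM_mul; [exact: openT| |exact: (SmM_cst _ openT)].
  apply: SmM_mul; [exact: openT| exact: HP |exact: (SmM_cst _ openT)].
have Hd : Sm setT (fun z => \det (F z)) by apply: Sm_det; [exact: openT | exact: HF].
pose U := [set z | F z \in unitmx].
have oU : open U.
  have -> : U = (fun z => \det (F z)) @^-1` [set x | x != 0].
    by apply/seteqP; split => z; rewrite /U /= unitmxE unitfE.
  apply: open_comp; last exact: open_neq.
  move=> x _; exact: (Sm_cont Hd).
have HFU := SmM_subset oU HF.
exists U, (fun z => sec (F z)); split; first exact: oU.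
split.
  by rewrite /U /= /F /Nf hN0 -mulmxA RR mulmx1 two_unit.
split.
  rewrite /sec /Dm /Kb; apply: (SmM_mul oU).
    apply: SmM_block; try exact: (SmM_cst _ oU).
    apply: SmM_ursub; apply: (SmM_mul oU _ HFU).
    apply: (SmM_mul oU); [exact: (SmM_tr HFU) | exact: (SmM_cst _ oU)].
  by apply: (SmM_inv oU HFU) => z Uz.
move=> z Uz /antiSp_E [SSz aSz].
have hz : Phi0 z *m F z = F z *m Rm.
  rewrite /F /Nf mulmxDr mulmxDl !mulmxA SSz mul1mx -mulmxA RR mulmx1 addrC.
  by rewrite ?mulmxA.
have s := sec_symp aSz hz Uz; split => //; exact: sec_Q hz Uz s.
Qed.


Definition Fq (P : M) : M := - (J *m P^T *m J) *m Rm *m P.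

Lemma SmM_Fq : SmM setT Fq.
Proof.
have oT : open (setT : set M) by exact: openT.
rewrite /Fq; apply: (SmM_mul oT _ (SmM_id oT)).
apply: (SmM_mul oT _ (SmM_cst _ oT)).
apply: SmM_opp; apply: (SmM_mul oT _ (SmM_cst _ oT)).
exact: (SmM_mul oT (SmM_cst _ oT) (SmM_tr (SmM_id oT))).
Qed.

Lemma Fq_Phi (P : M) : Sp P -> Fq P = Phi (coset P).
Proof.
move=> /Sp_symp h; rewrite Phi_coset ?symp_unit //.
by rewrite /Q /Fq symp_inv.
Qed.

Lemma cs_Phi (C : set M) : cosetSpace C -> antiSp (Phi C).
Proof. by move=> [P /Sp_symp hP <-]; rewrite Phi_coset ?symp_unit //; exact: Q_anti. Qed.

Lemma cs_inj (C D : set M) : cosetSpace C -> cosetSpace D -> Phi C = Phi D -> C = D.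
Proof.
move=> [P1 /Sp_symp h1 <-] [P2 /Sp_symp h2 <-].
rewrite !Phi_coset ?symp_unit //; exact: Q_inj.
Qed.

Lemma cs_surj (S : M) : antiSp S -> exists C, cosetSpace C /\ Phi C = S.
Proof.
move=> hS; have /antiSp_E [SS aS] := hS.
have [N [uN hN]] := intertw SS aS.
have s := sec_symp aS hN uN.
exists (coset (sec N)); split; first by exists (sec N) => //; apply/Sp_symp.
by rewrite Phi_coset ?symp_unit // (sec_Q hN uN s).
Qed.

Lemma part2 : @coset_diffeomorphic R n _ (@antiSp R n).
Proof.
exists (@Phi R n).
split; first exact: cs_Phi.
split; first exact: cs_inj.
split; first exact: cs_surj.
split.
  apply: (SmM_smooth_on' (U := setT) (F := Fq)) => //; first exact: openT.
    exact: SmM_Fq.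
  exact: Fq_Phi.
move=> y hy.
have [U [sg [oU [Uy [Hs Hz]]]]] := local_sec (Phi0 := fun z => z) (SmM_id openT) hy.
exists U, sg; split; first exact: oU.
split; first exact: Uy.
split.
  apply: (SmM_smooth_on' oU Hs); first by move=> z [].
  by [].
move=> z Yz Uz; have [h1 h2] := Hz z Uz Yz; split; first exact/Sp_symp.
by rewrite Phi_coset ?symp_unit.
Qed.

Lemma part3 : @coset_diffeomorphic R n _ (@SpR R n).
Proof.
exists (fun C => Rm *m Phi C).
split; first by move=> C hC; apply: anti_SpR; exact: cs_Phi.
split.
  move=> C D hC hD e; apply: cs_inj => //.
  by rewrite -[Phi C]RRK e RRK.
split.
  move=> y hy; have [C [hC e]] := cs_surj (SpR_anti hy).
  by exists C; split => //; rewrite e RRK.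
split.
  apply: (SmM_smooth_on' (U := setT) (F := fun P => Rm *m Fq P)) => //; first exact: openT.
    exact: (SmM_mul openT (SmM_cst _ openT) SmM_Fq).
  by move=> x hx; rewrite Fq_Phi.
move=> y hy.
have [U [sg [oU [Uy [Hs Hz]]]]] := local_sec (Phi0 := fun z => Rm *m z) (SmM_lin Rm) (SpR_anti hy).
exists U, sg; split; first exact: oU.
split; first exact: Uy.
split.
  apply: (SmM_smooth_on' oU Hs); first by move=> z [].
  by [].
move=> z Yz Uz; have [h1 h2] := Hz z Uz (SpR_anti Yz); split; first exact/Sp_symp.
by rewrite Phi_coset ?symp_unit // h2 RRK.
Qed.

End Main.

Theorem theorem1 (R : realType) (n : nat) :
  diffeomorphic (@SpR R n) (@antiSp R n) /\
  @coset_diffeomorphic R n _ (@antiSp R n) /\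
  @coset_diffeomorphic R n _ (@SpR R n).
Proof. split; first exact: part1. split; [exact: part2 | exact: part3]. Qed.
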